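(* Let $R$ be a commutative ring and $I$ an ideal of $R$ with $I=I^2$. Then $I$ has avoidance.
   Context: All rings are commutative with $1\neq 0$. An ideal $I$ of a ring $R$ has avoidance if whenever $I_1,\ldots,I_n$ are finitely many ideals of $R$ with $I\subseteq\bigcup_{k=1}^n I_k$, then $I\subseteq I_k$ for some $k$. *)

(* Defs.v *)
From mathcomp Require Import all_boot all_algebra.
Set Implicit Arguments. Unset Strict Implicit. Unset Printing Implicit Defensive.
Import GRing.Theory.
Local Open Scope ring_scope.

Definition is_ideal (R : comNzRingType) (I : R -> Prop) : Prop :=
  [/\ I 0,
      (forall x y, I x -> I y -> I (x + y)) &
      (forall r x, I x -> I (r * x))].

Definition ideal_mul (R : comNzRingType) (I J : R -> Prop) : R -> Prop :=
  fun x => exists (n : nat) (a b : 'I_n -> R),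
    (forall i, I (a i)) /\ (forall i, J (b i)) /\ x = \sum_(i < n) a i * b i.

Definition has_avoidance (R : comNzRingType) (I : R -> Prop) : Prop :=
  forall (n : nat) (Is : 'I_n -> R -> Prop),
    (forall k, is_ideal (Is k)) ->
    (forall x, I x -> exists k, Is k x) ->
    exists k, forall x, I x -> Is k x.

(* Main.v *)
Require Import Defs.
From mathcomp Require Import all_boot all_algebra.
From Stdlib Require Import Classical.
From Stdlib Require List.
Import GRing.Theory.
Local Open Scope ring_scope.

Section Av.
Variable R : comNzRingType.

Lemma id0 (K : R -> Prop) : is_ideal K -> K 0. Proof. by case. Qed.
Lemma idD (K : R -> Prop) : is_ideal K -> forall x y, K x -> K y -> K (x+y).
Proof. by case. Qed.
Lemma idMl (K : R -> Prop) : is_ideal K -> forall r x, K x -> K (r*x).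
Proof. by case. Qed.
Lemma idMr (K : R -> Prop) : is_ideal K -> forall x r, K x -> K (x*r).
Proof. move=> h x r Kx; rewrite mulrC; exact: idMl. Qed.
Lemma idN (K : R -> Prop) : is_ideal K -> forall x, K x -> K (-x).
Proof. move=> h x Kx; rewrite -mulN1r; exact: idMl. Qed.
Lemma idsum (K : R -> Prop) : is_ideal K -> forall n (f : 'I_n -> R),
  (forall i, K (f i)) -> K (\sum_(i<n) f i).
Proof. move=> h n f hf; apply: big_ind => //; [exact: id0| exact: idD]. Qed.

Arguments id0 {K}. Arguments idD {K}. Arguments idMl {K}. Arguments idMr {K}. Arguments idN {K}. Arguments idsum {K}.

Lemma remove_one (K0 : R -> Prop) Q : List.In K0 Q -> exists Q',
  (size Q' < size Q)%N /\ (forall K, List.In K Q' -> List.In K Q) /\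
  (forall K, List.In K Q -> K = K0 \/ List.In K Q').
Proof.
elim: Q => [//|a q IH] /= [e|H].
- subst a; exists q; split => //; split => [K|K [->|h]]; auto.
- case: (IH H) => q' [s [sub cov]]; exists (a::q'); split; first by rewrite /= ltnS.
  split => K /= [->|h]; auto.
  case: (cov K h) => [->|h']; auto.
Qed.

Variable I : R -> Prop.
Hypothesis hI : is_ideal I.
Hypothesis hI2 : forall x, I x <-> ideal_mul I I x.

Lemma sq_sub (P : R -> Prop) : is_ideal P ->
  (forall y x, I y -> I x -> P (y*x)) -> forall x, I x -> P x.
Proof. move=> hP h x /hI2 [n [a [b [ha [hb ->]]]]]; apply: idsum => // i; exact: h. Qed.

Lemma mainL N : forall L : seq (R -> Prop), (size L <= N)%N ->
  (forall K, List.In K L -> is_ideal K) ->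
  (forall x, I x -> exists K, List.In K L /\ K x) ->
  exists K, List.In K L /\ forall x, I x -> K x.
Proof.
elim: N => [|N IHN] L hs hid hcov.
  case: L hs hid hcov => [|? ?] // _ _ hcov.
  by have [K [[] _]] := hcov 0 (id0 hI).
apply: NNPP => hno.
case: L hs hid hcov hno => [|P Q] hs hid hcov hno.
  by have [K [[] _]] := hcov 0 (id0 hI).
have hP : is_ideal P by apply hid; left.
have hQ : forall K, List.In K Q -> is_ideal K by move=> K h; apply hid; right.
have [a [Ia na]] : exists a, I a /\ forall K, List.In K Q -> ~ K a.
  apply: NNPP => hn; apply: hno.
  have : exists K, List.In K Q /\ forall x, I x -> K x.
    apply: IHN => //.
    move=> x Ix; apply: NNPP => hx; apply: hn; exists x; split => // K KQ Kx.
    by apply: hx; exists K.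
  by case=> K [KQ HK]; exists K; split => //; right.
have Pa : P a.
  have [K [[<-|KQ] Ka]] := hcov a Ia => //.
  by case: (na K KQ).
have claim : forall T : seq (R -> Prop), forall y, I y ->
   (forall K, List.In K Q -> ~ List.In K T -> K y) -> forall x, I x -> P (y * x).
  elim=> [|K0 T IHT] y Iy hy x Ix.
    apply: idMr => //.
    have hPya : P (y + a).
      have [K [[<-|KQ] Ka]] := hcov (y+a) (idD hI _ _ Iy Ia) => //.
      exfalso; apply: (na K KQ).
      have -> : a = (y + a) - y by rewrite addrAC subrr add0r.
      exact: idD (hQ K KQ) _ _ Ka (idN (hQ K KQ) _ (hy K KQ id)).
    have -> : y = (y + a) - a by rewrite addrK.
    exact: idD hP _ _ hPya (idN hP _ Pa).
  case: (classic (List.In K0 Q)) => K0Q; last first.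
    apply: IHT => // K KQ nKT; apply: hy => // [[e|//]].
    by rewrite e in K0Q.
  have hK0 := hQ K0 K0Q.
  have [Q' [sQ' [subQ' covQ']]] := @remove_one K0 Q K0Q.
  pose J := fun w => exists u v, I u /\ P u /\ I v /\ K0 v /\ w = u + v.
  have hJ : is_ideal J.
    split.
    - exists 0, 0; split; first exact: id0.
      split; first exact: id0.
      split; first exact: id0.
      by split; [exact: id0| rewrite addr0].
    - move=> w1 w2 [u1 [v1 [I1 [P1 [J1 [K1 ->]]]]]] [u2 [v2 [I2 [P2 [J2 [K2 ->]]]]]].
      exists (u1+u2), (v1+v2); do !split; try exact: idD.
      by rewrite addrACA.
    - move=> r w [u [v [Iu [Pu [Iv [Kv ->]]]]]].
      exists (r*u), (r*v); do !split; try exact: idMl.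
      by rewrite mulrDr.
  have IJ : forall x, I x -> J x.
    have [K [[<-|KQ'] HK]] : exists K, List.In K (J :: Q') /\ forall x, I x -> K x.
      - apply: IHN.
        + by apply: leq_trans sQ' _; move: hs; rewrite /= ltnS.
        + by move=> K [<-|h]; [exact hJ| apply hQ, subQ', h].
        + move=> x0 Ix0; have [K [[<-|KQ] Kx]] := hcov x0 Ix0.
          * exists J; split; first by left.
            exists x0, 0; do !split => //; [exact: id0|exact: id0|by rewrite addr0].
          * case: (covQ' K KQ) => [eK|KQ'].
              subst K; exists J; split; first by left.
              exists 0, x0; do !split => //; [exact: id0|exact: id0|by rewrite add0r].
            by exists K; split; [right|].
    - by [].
    - exfalso; apply: hno; exists K; split; [right; apply subQ'|]; done.
  move: Ix => /hI2 [n [a' [b' [ha [hb ->]]]]].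
  rewrite mulr_sumr; apply: idsum => // i; rewrite mulrA.
  have [u [v [Iu [Pu [Iv [K0v ->]]]]]] := IJ _ (ha i).
  rewrite mulrDr mulrDl; apply: idD => //.
    exact: idMr hP _ _ (idMl hP y _ Pu).
  apply: IHT => //; first exact: idMl.
  move=> K KQ nKT; case: (classic (K = K0)) => [->|nK].
    exact: idMl.
  apply: idMr; first exact: hQ.
  apply: hy => // [[e|//]]; by apply: nK.
apply: hno; exists P; split; first by left.
apply: sq_sub hP _ => y x Iy Ix.
by apply: (claim Q) => // K KQ.
Qed.

End Av.

Lemma In_map_ex (T U : Type) (f : T -> U) s y :
  List.In y (map f s) -> exists x, y = f x.
Proof. elim: s => //= x s IH [<-|h]; [by exists x| exact: IH h]. Qed.

Lemma In_map_mem (T : eqType) (U : Type) (f : T -> U) s x :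
  x \in s -> List.In (f x) (map f s).
Proof.
elim: s => //= z s IH; rewrite inE => /orP [/eqP ->|h]; [by left|right; exact: IH].
Qed.

Theorem corollary2p2 (R : comNzRingType) (I : R -> Prop) :
  is_ideal I ->
  (forall x, I x <-> ideal_mul I I x) ->
  has_avoidance I.
Proof.
move=> hI hI2 n Is hid hcov.
have [K [KL HK]] : exists K, List.In K (map Is (enum 'I_n)) /\ forall x, I x -> K x.
  apply: (@mainL R I hI hI2 _ _ (leqnn _)).
  - move=> K h; have [k ->] := @In_map_ex _ _ _ _ _ h; exact: hid.
  - move=> x Ix; have [k hk] := hcov x Ix; exists (Is k); split => //.
    by apply: (@In_map_mem _ _ Is); rewrite mem_enum.
have [k ek] := @In_map_ex _ _ _ _ _ KL.
by exists k; rewrite -ek.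
Qed.
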